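(* Let $\lambda\in(0,1)$, let $\tau_0(x)=\lambda x$, $\tau_{1/4}(x)=\lambda(x+\frac14)$, let $X_L$ be their attractor, let $W(x)=\cos^2(2\pi x/\lambda)$, and let $R_W$, $P_x$, $\mathbf{N}_0$, $\mathbf{N}_1$, $h_0$, $h_1$ be as described in the context. Then: (1) $h_0$ is continuous on $X_L$ and $R_Wh_0=h_0$. If $h_0$ has no zeroes on $X_L$, then $h_0\equiv1$. (2) If $\lambda=1-\frac1{2n}$ for some $n\in\mathbb{N}$, then $h_1$ is continuous on $X_L$ and $R_Wh_1=h_1$; both $h_0$ and $h_1$ have zeroes and both are non-constant. If $h_0+h_1$ has no zeroes on $X_L$, then $h_0+h_1\equiv1$.
   Context: $X_L$ is the unique nonempty compact set with $X_L=\tau_0(X_L)\cup\tau_{1/4}(X_L)$. Note $W(\tau_0x)+W(\tau_{1/4}x)=1$ for all $x$. The transfer operator is $(R_Wf)(x)=W(\tau_0x)f(\tau_0x)+W(\tau_{1/4}x)f(\tau_{1/4}x)$. Let $\Omega=\{0,\frac14\}^{\mathbb{N}}$ with the $\sigma$-algebra generated by cylinder sets. For $x\in X_L$, $P_x$ is the unique probability measure on $\Omega$ such that for every $n$ and $\omega_1,\dots,\omega_n\in\{0,\frac14\}$, the cylinder $\{\eta\in\Omega:\eta_i=\omega_i,\ i\le n\}$ has measure $W(\tau_{\omega_1}x)W(\tau_{\omega_2}\tau_{\omega_1}x)\cdots W(\tau_{\omega_n}\cdots\tau_{\omega_1}x)$. $\mathbf{N}_0$ is the set of $\omega\in\Omega$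 with $\omega_n=0$ for all sufficiently large $n$; $\mathbf{N}_1$ is the set of $\omega\in\Omega$ with $\omega_n=\frac14$ for all sufficiently large $n$. $h_0(x)=P_x(\mathbf{N}_0)$ and $h_1(x)=P_x(\mathbf{N}_1)$ for $x\in X_L$. *)

(* Defs.v *)
From HB Require Import structures.
From mathcomp Require Import all_boot all_order all_algebra.
From mathcomp Require Import all_classical all_reals all_analysis.
Set Implicit Arguments. Unset Strict Implicit. Unset Printing Implicit Defensive.
Import Order.TTheory GRing.Theory Num.Theory numFieldNormedType.Exports.
Local Open Scope classical_set_scope.
Local Open Scope ring_scope.

(* Omega = {0,1/4}^N, encoded as nat -> bool: false <-> 0, true <-> 1/4.
   Index k : nat corresponds to the paper's omega_{k+1}. *)
Definition Om := nat -> bool.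

Definition cyl (n : nat) (w : Om) : set Om := [set e | forall i, (i < n)%N -> e i = w i].

Definition cylinders : set (set Om) := [set A | exists n w, A = cyl n w].

Definition Omega := g_sigma_algebraType cylinders.

Section Defs.
Variable R : realType.

Definition tau (lam : R) (b : bool) (x : R) : R :=
  if b then lam * (x + 4^-1) else lam * x.

Definition W (lam : R) (x : R) : R := (cos (2 * pi * x / lam)) ^+ 2.

Fixpoint taus (lam : R) (w : Om) (k : nat) (x : R) : R :=
  match k with
  | O => x
  | S k' => tau lam (w k') (taus lam w k' x)
  end.

Definition RW (lam : R) (f : R -> R) (x : R) : R :=
  W lam (tau lam false x) * f (tau lam false x) + W lam (tau lam true x) * f (tau lam true x).

Definition cylw (lam : R) (x : R) (n : nat) (w : Om) : R :=
  \prod_(k < n) W lam (taus lam w k.+1 x).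

Definition N0 : set Om := [set w | exists m, forall n, (m <= n)%N -> w n = false].
Definition N1 : set Om := [set w | exists m, forall n, (m <= n)%N -> w n = true].

Definition is_attractor (lam : R) (X : set R) : Prop :=
  X !=set0 /\ compact X /\ X = (tau lam false @` X) `|` (tau lam true @` X).

Definition is_path_measures (lam : R) (X : set R)
  (P : R -> probability Omega R) : Prop :=
  forall x, X x -> forall n (w : Om), P x (cyl n w) = (cylw lam x n w)%:E.

Definition h0 (P : R -> probability Omega R) (x : R) : R := fine (P x N0).
Definition h1 (P : R -> probability Omega R) (x : R) : R := fine (P x N1).
End Defs.

(* Main.v *)
Require Import Defs.
From HB Require Import structures.
From mathcomp Require Import all_boot all_order all_algebra.
From mathcomp Require Import all_classical all_reals all_analysis.
From mathcomp Require Import ring lra.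
Import Order.TTheory GRing.Theory Num.Theory numFieldNormedType.Exports.
Local Open Scope classical_set_scope.
Local Open Scope ring_scope.
Set Implicit Arguments. Unset Strict Implicit. Unset Printing Implicit Defensive.
Definition shift (w : Om) : Om := fun i => w i.+1.
Definition cons (b : bool) (w : Om) : Om := fun i => if i is j.+1 then w j else b.

Lemma taus_cons (R : realType) (lam : R) b w k x :
  taus lam (cons b w) k.+1 x = taus lam w k (tau lam b x).
Proof.
elim: k => [|k IH]; first by [].
by transitivity (tau lam (w k) (taus lam (cons b w) k.+1 x)); [|rewrite IH].
Qed.

Lemma cylw_cons (R : realType) (lam : R) x n b w :
  cylw lam x n.+1 (cons b w) = W lam (tau lam b x) * cylw lam (tau lam b x) n w.
Proof.
rewrite /cylw big_ord_recl; congr (_ * _).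
apply: eq_bigr => i _; congr (W lam _).
exact: (taus_cons lam b w i.+1 x).
Qed.

Lemma taus_cst (R : realType) (lam : R) b k x :
  taus lam (fun _ => b) k x = iter k (tau lam b) x.
Proof. by elim: k => //= k ->. Qed.

Lemma W0E (R : realType) (lam : R) x : lam != 0 ->
  W lam (tau lam false x) = cos (2 * pi * x) ^+ 2.
Proof. by move=> l0; rewrite /W /tau; congr (cos _ ^+ 2); field. Qed.

Lemma W1E (R : realType) (lam : R) x : lam != 0 ->
  W lam (tau lam true x) = sin (2 * pi * x) ^+ 2.
Proof.
move=> l0; rewrite /W /tau.
have -> : 2 * pi * (lam * (x + 4^-1)) / lam = 2 * pi * x + pi / 2 by field.
by rewrite cosDpihalf sqrrN.
Qed.

Lemma W01 (R : realType) (lam : R) x : lam != 0 ->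
  W lam (tau lam false x) + W lam (tau lam true x) = 1.
Proof. by move=> l0; rewrite W0E // W1E // cos2Dsin2. Qed.

Lemma W_ge0 (R : realType) (lam : R) x : 0 <= W lam x.
Proof. by rewrite /W sqr_ge0. Qed.

Lemma W_le1 (R : realType) (lam : R) x : W lam x <= 1.
Proof. by rewrite /W cos2sin2 gerBl sqr_ge0. Qed.

Lemma cos_lip (R : realType) (u v : R) : `|cos u - cos v| <= `|u - v|.
Proof.
wlog uv : u v / u <= v.
  move=> H; case: (leP u v) => [|/ltW] h; first exact: H.
  by rewrite distrC [`|u - v|]distrC; apply: H.
have [c _ E] := @MVT_segment R cos (fun x => - sin x) u v uv
  (fun x _ => is_derive_cos x) (continuous_subspaceT (@continuous_cos R)).
rewrite distrC [`|u - v|]distrC E normrM normrN.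
by rewrite -[leRHS]mul1r ler_wpM2r // sin_max.
Qed.

Lemma W0_lip (R : realType) (lam : R) x y : lam != 0 ->
  `|W lam (tau lam false x) - W lam (tau lam false y)| <= 4 * pi * `|x - y|.
Proof.
move=> l0; rewrite !W0E // subr_sqr normrM.
have h1 : `|cos (2 * pi * x) + cos (2 * pi * y)| <= 2.
  by rewrite (le_trans (ler_normD _ _)) // -[2]/(1+1) lerD // cos_max.
have h2 : `|cos (2 * pi * x) - cos (2 * pi * y)| <= 2 * pi * `|x - y|.
  rewrite (le_trans (cos_lip _ _)) // -mulrBr normrM ger0_norm //.
  by rewrite mulr_ge0 // pi_ge0.
rewrite (le_trans (ler_pM _ _ h2 h1)) ?normr_ge0 //.
by rewrite le_eqVlt; apply/orP; left; apply/eqP; ring.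
Qed.
Notation mOm := (@measurable _ Omega).

Lemma measE : mOm = <<s cylinders>>.
Proof. by []. Qed.

Lemma mcyl n w : mOm (cyl n w).
Proof. by apply: sub_sigma_algebra; exists n, w. Qed.

Lemma shift_cyl n w :
  shift @^-1` (cyl n w) = cyl n.+1 (cons false w) `|` cyl n.+1 (cons true w).
Proof.
apply/seteqP; split => e.
  rewrite /cyl /= => h; case E: (e 0%N); [right|left] => -[|i] //= Hi;
  exact: h.
by rewrite /cyl /= => -[] h i Hi; exact: (h i.+1).
Qed.

Lemma mshift : measurable_fun (setT : set Omega) (shift : Omega -> Omega).
Proof.
apply: (@measurability _ _ Omega Omega setT shift cylinders measE).
move=> _ [_ [n [w ->]] <-].
rewrite setTI shift_cyl; apply: measurableU; exact: mcyl.
Qed.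

Definition dep (n : nat) (E : set Om) :=
  forall w w', (forall i, (i < n)%N -> w i = w' i) -> E w -> E w'.

Lemma cons_shift w : cons (w 0%N) (shift w) = w.
Proof. by apply: funext => -[]. Qed.

Definition b1 (b : bool) : set Om := cyl 1 (fun _ => b).

Lemma b1E b w : b1 b w <-> w 0%N = b.
Proof. by split => [/(_ 0%N erefl)|h [|]]. Qed.

Lemma split_set (E : set Om) :
  E = (b1 false `&` shift @^-1` [set w | E (cons false w)]) `|`
      (b1 true `&` shift @^-1` [set w | E (cons true w)]).
Proof.
apply/seteqP; split => w.
  rewrite -{1}(cons_shift w) => Ew.
  case E0 : (w 0%N); [right|left]; (split; [exact/b1E|]); by rewrite /= -E0.
by move=> [] [/b1E h]; rewrite /= -h cons_shift.
Qed.

Lemma dep_cons n E b : dep n.+1 E -> dep n [set w | E (cons b w)].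
Proof. by move=> h w w' e; apply: h => -[|i] //= /e. Qed.

Lemma dep0 E : dep 0 E -> E = set0 \/ E = setT.
Proof.
move=> h; have [[w Ew]|] := pselect (E !=set0).
  by right; apply/seteqP; split => // w' _; exact: h Ew.
by move=> /set0P/negP/negbNE/eqP ->; left.
Qed.

Lemma mb1 b : mOm (b1 b).
Proof. exact: mcyl. Qed.

Lemma mpre_shift (E : set Om) : mOm E -> mOm (shift @^-1` E).
Proof. by move=> mE; rewrite -[X in mOm X]setTI; apply: mshift. Qed.

Lemma mdep n E : dep n E -> mOm E.
Proof.
elim: n E => [|n IH] E h.
  by case: (dep0 h) => ->; [exact: measurable0|exact: measurableT].
rewrite (split_set E); apply: measurableU; apply: measurableI;
  (try exact: mb1); apply: mpre_shift; apply: IH; exact: dep_cons.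
Qed.
Definition Gc : set (set Om) := [set A | A = set0 \/ cylinders A].

Lemma mGc : mOm = <<s Gc >>.
Proof.
apply/seteqP; split.
  apply: smallest_sub; first exact: smallest_sigma_algebra.
  by move=> A cA; apply: sub_sigma_algebra; right.
apply: smallest_sub; first exact: smallest_sigma_algebra.
move=> A [->|cA]; first exact: (@measurable0 _ Omega).
exact: sub_sigma_algebra.
Qed.

Lemma setI_Gc : setI_closed Gc.
Proof.
move=> A B [->|[n [w ->]]]; first by left; rewrite set0I.
move=> [->|[m [v ->]]]; first by left; rewrite setI0.
have [agree|] := pselect (forall i, (i < minn n m)%N -> w i = v i).
  right; exists (maxn n m), (fun i => if (i < n)%N then w i else v i).
  apply/seteqP; split => e.
    move=> [h1 h2] i; rewrite leq_max => /orP[] Hi.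
      by rewrite Hi; apply: h1.
    by case: ifP => Hn; [apply: h1|apply: h2].
  move=> h; split => i Hi.
    by rewrite h ?Hi // leq_max Hi.
  rewrite h ?leq_max ?Hi ?orbT //; case: ifP => // Hn; apply: agree.
  by rewrite leq_min Hn.
move=> /existsNP [i /not_implyP [Hi ne]]; left; apply/seteqP; split => // e [h1 h2].
apply: ne; rewrite leq_min in Hi; case/andP: Hi => H1 H2.
by rewrite -h1 // -h2.
Qed.

Section pfsec.
Context (R : realType) (mu : {measure set Omega -> \bar R}).
Definition pf (A : set Omega) : \bar R := mu (shift @^-1` A).

Let pf0 : pf set0 = 0%E.
Proof. by rewrite /pf preimage_set0 measure0. Qed.

Let pf_ge0 A : (0 <= pf A)%E.
Proof. by apply: measure_ge0. Qed.

Let pf_sigma_additive : semi_sigma_additive pf.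
Proof.
move=> F mF tF mUF; rewrite /pf preimage_bigcup.
apply: measure_semi_sigma_additive.
- by move=> n; apply: mpre_shift.
- apply/trivIsetP => /= i j _ _ ij; rewrite -preimage_setI.
  by move/trivIsetP : tF => /(_ _ _ _ _ ij) ->//; rewrite preimage_set0.
- by rewrite -preimage_bigcup; apply: mpre_shift.
Qed.

HB.instance Definition _ := isMeasure.Build _ _ _ pf pf0 pf_ge0 pf_sigma_additive.
End pfsec.
Section Main.
Variables (R : realType) (lam : R) (hlam0 : 0 < lam) (hlam1 : lam < 1).
Variables (X : set R) (hX : is_attractor lam X).
Variables (P : R -> probability Omega R) (hP : is_path_measures lam X P).

Let l0 : lam != 0. Proof. by rewrite gt_eqF. Qed.

Lemma tauX b x : X x -> X (tau lam b x).
Proof.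
move=> Xx; case: hX => _ [_ ->].
by case: b; [right|left]; exists x.
Qed.

Lemma SH x b (E : set Om) : X x -> mOm E ->
  P x (b1 b `&` shift @^-1` E) = ((W lam (tau lam b x))%:E * P (tau lam b x) E)%E.
Proof.
move=> Xx mE.
pose m1 := pf (mrestr (P x) (mb1 b)).
pose m2 := mscale (NngNum (W_ge0 lam (tau lam b x))) (P (tau lam b x)).
have -> : P x (b1 b `&` shift @^-1` E) = m1 E by rewrite /m1 /pf /mrestr setIC.
have -> : ((W lam (tau lam b x))%:E * P (tau lam b x) E)%E = m2 E by [].
apply: (@measure_unique _ R Omega Gc (fun _ => setT) mGc setI_Gc _ _ m1 m2) => //.
- by move=> _; right; exists 0%N, (fun _ => false); apply/seteqP; split.
- by rewrite bigcup_const.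
- move=> A [->|[n [w ->]]]; first by rewrite !measure0.
  rewrite /m1 /m2 /=; rewrite /pf /mrestr /mscale /= shift_cyl.
  have -> : (cyl n.+1 (cons false w) `|` cyl n.+1 (cons true w)) `&` b1 b
      = cyl n.+1 (cons b w).
    apply/seteqP; split => e.
      move=> [hU /b1E e0] [|i] Hi; first exact: e0.
      by case: hU => h; exact: (h i.+1).
    move=> h; split; last by apply/b1E; exact: (h 0%N).
    have e0 : e 0%N = b by exact: (h 0%N).
    by case: b e0 {m1 m2} h => e0 h; [right|left] => -[|i] Hi //; exact: h.
  by rewrite hP // cylw_cons hP //; apply: tauX.
- move=> _; rewrite /m1 /=; rewrite /pf /mrestr.
  by rewrite (le_lt_trans (probability_le1 _ _)) ?ltey //; apply: measurableI;
    [apply: mpre_shift; exact: measurableT | exact: mb1].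
Qed.

Lemma Pfin y (A : set Om) : mOm A -> P y A = (fine (P y A))%:E.
Proof.
move=> mA; rewrite fineK // ge0_fin_numE ?measure_ge0 //.
by rewrite (le_lt_trans (probability_le1 _ mA)) ?ltey.
Qed.

Lemma Pfine_ge0 y (A : set Om) : 0 <= fine (P y A).
Proof. by apply: fine_ge0; apply: measure_ge0. Qed.

Lemma Pfine_le1 y (A : set Om) : mOm A -> fine (P y A) <= 1.
Proof. by move=> mA; rewrite -lee_fin -Pfin // probability_le1. Qed.

Lemma decomp x (E : set Om) : X x -> mOm E ->
  P x (shift @^-1` E) = ((W lam (tau lam false x))%:E * P (tau lam false x) E +
                         (W lam (tau lam true x))%:E * P (tau lam true x) E)%E.
Proof.
move=> Xx mE; rewrite -!SH //.
rewrite -measureU; first (congr (P x _); apply/seteqP; split).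
- move=> w Ew; have /orP[e0|e0] : (w 0%N) || ~~ (w 0%N) by case: (w 0%N).
    by right; split => //; apply/b1E; rewrite e0.
  by left; split => //; apply/b1E; apply/negbTE.
- by move=> w [] [].
- by apply: measurableI; [exact: mb1|exact: mpre_shift].
- by apply: measurableI; [exact: mb1|exact: mpre_shift].
- by apply/seteqP; split => // w [[/b1E h1 _] [/b1E h2 _]]; rewrite h1 in h2.
Qed.

Lemma decomp_fine x (E : set Om) : X x -> mOm E ->
  fine (P x (shift @^-1` E)) = W lam (tau lam false x) * fine (P (tau lam false x) E) +
                         W lam (tau lam true x) * fine (P (tau lam true x) E).
Proof.
move=> Xx mE; rewrite decomp // (Pfin (tau lam false x) mE) (Pfin (tau lam true x) mE).
by rewrite -!EFinM -EFinD.
Qed.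

Definition Nb (b : bool) : set Om := [set w | exists m, forall n, (m <= n)%N -> w n = b].
Definition Ab (b : bool) (m : nat) : set Om := [set w | forall n, (m <= n)%N -> w n = b].
Definition Bb (b : bool) (m k : nat) : set Om :=
  [set w | forall i, (m <= i)%N -> (i < k)%N -> w i = b].

Lemma dep_Bb b m k : dep k (Bb b m k).
Proof. by move=> w w' e h i Hm Hk; rewrite -e // h. Qed.

Lemma mBb b m k : mOm (Bb b m k).
Proof. exact: (mdep (@dep_Bb b m k)). Qed.

Lemma AbE b m : Ab b m = \bigcap_k Bb b m k.
Proof.
apply/seteqP; split => w; first by move=> h k _ i Hm _; apply: h.
by move=> h n Hn; apply: (h n.+1 I).
Qed.

Lemma mAb b m : mOm (Ab b m).
Proof. by rewrite AbE; apply: bigcapT_measurable => k; apply: mBb. Qed.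

Lemma NbE b : Nb b = \bigcup_m Ab b m.
Proof. by apply/seteqP; split => w [m] *; exists m. Qed.

Lemma mNb b : mOm (Nb b).
Proof. by rewrite NbE; apply: bigcupT_measurable => m; apply: mAb. Qed.

Lemma shift_Nb b : shift @^-1` (Nb b) = Nb b.
Proof.
apply/seteqP; split => w [m h].
  by exists m.+1 => -[|n] // Hn; apply: h.
by exists m => n Hn; apply: h; apply: leqW.
Qed.

Lemma shift_Ab b m : shift @^-1` (Ab b m) = Ab b m.+1.
Proof.
apply/seteqP; split => w h.
  by move=> -[|n] // Hn; apply: h.
by move=> n Hn; apply: h.
Qed.

Definition hb (b : bool) (x : R) : R := fine (P x (Nb b)).

Lemma hb_harm b x : X x ->
  hb b x = W lam (tau lam false x) * hb b (tau lam false x) +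
           W lam (tau lam true x) * hb b (tau lam true x).
Proof. by move=> Xx; rewrite /hb -decomp_fine ?shift_Nb //; apply: mNb. Qed.

Lemma hb_ge0 b x : 0 <= hb b x. Proof. exact: Pfine_ge0. Qed.
Lemma hb_le1 b x : hb b x <= 1. Proof. by apply: Pfine_le1; apply: mNb. Qed.

Lemma decomp2 x (E0 E1 : set Om) : X x -> mOm E0 -> mOm E1 ->
  fine (P x ((b1 false `&` shift @^-1` E0) `|` (b1 true `&` shift @^-1` E1))) =
    W lam (tau lam false x) * fine (P (tau lam false x) E0) +
    W lam (tau lam true x) * fine (P (tau lam true x) E1).
Proof.
move=> Xx m0 m1.
transitivity (fine ((W lam (tau lam false x))%:E * P (tau lam false x) E0 +
                    (W lam (tau lam true x))%:E * P (tau lam true x) E1)%E); last first.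
  rewrite (Pfin (tau lam false x) m0) (Pfin (tau lam true x) m1).
  by rewrite -!EFinM -EFinD.
congr fine; rewrite -!SH //; rewrite -measureU //.
- by apply: measurableI; [exact: mb1|exact: mpre_shift].
- by apply: measurableI; [exact: mb1|exact: mpre_shift].
- by apply/seteqP; split => // w [[/b1E h1 _] [/b1E h2 _]]; rewrite h1 in h2.
Qed.

Definition K := 4 * pi / (1 - lam).

Lemma K_ge0 : 0 <= K.
Proof. by rewrite /K divr_ge0 ?mulr_ge0 ?pi_ge0 // subr_ge0 ltW. Qed.

Lemma KE : 4 * pi + K * lam = K.
Proof. rewrite /K; have : 1 - lam != 0 by rewrite subr_eq0 gt_eqF. move=> h; field. by []. Qed.

Lemma tau_dist b x y : `|tau lam b x - tau lam b y| = lam * `|x - y|.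
Proof.
rewrite /tau; case: b; rewrite -mulrBr normrM gtr0_norm //.
by congr (_ * `|_|); ring.
Qed.

Lemma TV n : forall E, dep n E -> forall x y, X x -> X y ->
  `|fine (P x E) - fine (P y E)| <= K * `|x - y|.
Proof.
elim: n => [|n IH] E hE x y Xx Xy.
  case: (dep0 hE) => ->.
    by rewrite !measure0 subrr normr0 mulr_ge0 ?K_ge0.
  by rewrite !probability_setT subrr normr0 mulr_ge0 ?K_ge0.
have hE0 := @dep_cons n E false hE; have hE1 := @dep_cons n E true hE.
have m0 := mdep hE0; have m1 := mdep hE1.
rewrite (split_set E) !decomp2 //.
set a := W lam (tau lam false x); set a' := W lam (tau lam false y).
have -> : W lam (tau lam true x) = 1 - a by rewrite -(W01 x l0) addrC addKr.
have -> : W lam (tau lam true y) = 1 - a' by rewrite -(W01 y l0) addrC addKr.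
set p0 := fine _; set p1 := fine _; set q0 := fine _; set q1 := fine _.
have -> : a * p0 + (1 - a) * p1 - (a' * q0 + (1 - a') * q1) =
   (a - a') * (p0 - p1) + (a' * (p0 - q0) + (1 - a') * (p1 - q1)) by ring.
have ha' : 0 <= a' by apply: W_ge0.
have ha'1 : 0 <= 1 - a' by rewrite subr_ge0 W_le1.
have d0 : `|p0 - q0| <= K * (lam * `|x - y|).
  by rewrite -(tau_dist false) IH //; apply: tauX.
have d1 : `|p1 - q1| <= K * (lam * `|x - y|).
  by rewrite -(tau_dist true) IH //; apply: tauX.
have dp : `|p0 - p1| <= 1.
  have := Pfine_ge0 (tau lam false x) [set w | E (cons false w)].
  have := Pfine_ge0 (tau lam true x) [set w | E (cons true w)].
  have := Pfine_le1 (tau lam false x) m0.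
  have := Pfine_le1 (tau lam true x) m1.
  rewrite -/p0 -/p1 => h1 h2 h3 h4.
  by rewrite ler_norml; apply/andP; split; lra.
have da : `|a - a'| <= 4 * pi * `|x - y| by apply: W0_lip.
clearbody a a' p0 p1 q0 q1.
rewrite (le_trans (ler_normD _ _)) // -KE [X in _ <= X]mulrDl; apply: lerD.
  by rewrite normrM -[leRHS]mulr1 ler_pM // normr_ge0.
rewrite (le_trans (ler_normD _ _)) // !normrM (ger0_norm ha') (ger0_norm ha'1).
apply: le_trans (lerD (ler_wpM2l ha' d0) (ler_wpM2l ha'1 d1)) _.
by rewrite le_eqVlt; apply/orP; left; apply/eqP; ring.
Qed.

Local Open Scope ereal_scope.
Lemma le_lim_shift (u : nat -> \bar R) (l c : \bar R) (r : R) :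
  u @ \oo --> l -> (forall k, c <= u k + r%:E) -> c <= l + r%:E.
Proof.
move=> ul h.
have ul' : (fun k => u k + r%:E) @ \oo --> l + r%:E.
  by apply: cvgeD; [exact: fin_num_adde_defl|exact: ul|exact: cvg_cst].
rewrite -(cvg_lim _ ul') //; apply: lime_ge; first by apply/cvg_ex; eexists; exact: ul'.
exact: nearW.
Qed.

Lemma le_lim_ub (u : nat -> \bar R) (l c : \bar R) :
  u @ \oo --> l -> (forall k, u k <= c) -> l <= c.
Proof.
move=> ul h; rewrite -(cvg_lim _ ul) //; apply: lime_le.
  by apply/cvg_ex; eexists; exact: ul.
exact: nearW.
Qed.
Local Close Scope ereal_scope.

Lemma Ab_cvg y b m : (P y \o Bb b m) @ \oo --> P y (Ab b m).
Proof.
rewrite AbE; apply: nonincreasing_cvg_mu.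
- by rewrite (le_lt_trans (probability_le1 _ (mBb _ _ _))) ?ltey.
- by move=> k; apply: mBb.
- by rewrite -AbE; apply: mAb.
- by move=> k k' kk'; apply/subsetPset => w h i Hm Hk; apply: h => //; apply: leq_trans kk'.
Qed.

Lemma Nb_cvg y b : (P y \o Ab b) @ \oo --> P y (Nb b).
Proof.
rewrite NbE; apply: nondecreasing_cvg_mu.
- by move=> m; apply: mAb.
- by rewrite -NbE; apply: mNb.
- by move=> m m' mm'; apply/subsetPset => w h n Hn; apply: h; apply: leq_trans Hn.
Qed.

Lemma hb_lip1 b x y : X x -> X y -> (P x (Nb b) <= P y (Nb b) + (K * `|x - y|)%:E)%E.
Proof.
move=> Xx Xy.
have h1 m k : (P x (Bb b m k) <= P y (Bb b m k) + (K * `|x - y|)%:E)%E.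
  rewrite (Pfin x (mBb b m k)) (Pfin y (mBb b m k)) -EFinD lee_fin.
  have := TV (@dep_Bb b m k) Xx Xy; rewrite ler_norml => /andP[_ h].
  by rewrite -lerBlDl.
have h2 m : (P x (Ab b m) <= P y (Ab b m) + (K * `|x - y|)%:E)%E.
  apply: le_lim_shift (@Ab_cvg y b m) _ => k.
  apply: le_trans (h1 m k); apply: le_measure; rewrite ?inE; try exact: mAb; try exact: mBb.
  by move=> w h i Hm _; apply: h.
apply: le_lim_ub (@Nb_cvg x b) _ => m.
apply: le_trans (h2 m) _; rewrite leeD2r //; apply: le_measure; rewrite ?inE;
  try exact: mAb; try exact: mNb.
by move=> w h; exists m.
Qed.

Lemma hb_lip b x y : X x -> X y -> `|hb b x - hb b y| <= K * `|x - y|.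
Proof.
move=> Xx Xy; have := hb_lip1 b Xx Xy; have := hb_lip1 b Xy Xx.
rewrite /hb (Pfin x (mNb b)) (Pfin y (mNb b)) -!EFinD !lee_fin distrC.
by move=> h1 h2; rewrite ler_norml; apply/andP; split; lra.
Qed.

Lemma geo_small (e : R) : 0 < e -> exists k, lam ^+ k < e.
Proof.
move=> e0; have lt1 : `|lam| < 1 by rewrite gtr0_norm.
have /cvgrPdist_lt/(_ e e0) [N _ HN] := cvg_expr lt1.
exists N; have := HN N (leqnn N); rewrite /= sub0r normrN gtr0_norm //.
exact: exprn_gt0.
Qed.

Lemma iter_tau_dist b k y p : tau lam b p = p ->
  `|iter k (tau lam b) y - p| = lam ^+ k * `|y - p|.
Proof.
move=> fp; elim: k => [|k IH]; first by rewrite mul1r.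
by rewrite iterS -{1}fp tau_dist IH exprS mulrA.
Qed.

Lemma lip_cont (f : R -> R) (L : R) : 0 <= L ->
  (forall x y, X x -> X y -> `|f x - f y| <= L * `|x - y|) -> {within X, continuous f}.
Proof.
move=> L0 lip; apply/subspace_continuousP => x Xx; apply/cvgrPdist_lt => e e0.
have eL : 0 < e / (L + 1) by rewrite divr_gt0 // ltr_wpDl.
rewrite near_withinE; near_simpl; near=> t => Xt.
have xt : `|x - t| < e / (L + 1).
  by near: t; apply: (filterS _ (nbhsx_ballx x _ eL)) => t; rewrite -ball_normE.
rewrite (le_lt_trans (lip _ _ Xx Xt)) //.
rewrite (@le_lt_trans _ _ ((L + 1) * `|x - t|)) //.
  by rewrite ler_wpM2r // lerDl.
by rewrite mulrC -ltr_pdivlMr // ltr_wpDl.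
Unshelve. all: by end_near.
Qed.

Lemma fix_in_X b p : tau lam b p = p -> X p.
Proof.
move=> fp; case: hX => [[a Xa] [cX _]].
have clX : closed X by apply: compact_closed => //; exact: hausdorff_space_normed.
apply: (@closed_cvg _ _ \oo _ (fun k => iter k (tau lam b) a) X clX).
  by apply: nearW => k; elim: k => // k IH; rewrite iterS; apply: tauX.
apply/cvgrPdist_lt => e e0.
have [|N hN] := @geo_small (e / (`|a - p| + 1)); first by rewrite divr_gt0 // ltr_wpDl.
near=> k; rewrite distrC iter_tau_dist //.
have lk : lam ^+ k <= lam ^+ N.
  by rewrite ler_wiXn2l // ?ltW //; near: k; exists N.
rewrite (@le_lt_trans _ _ (lam ^+ N * (`|a - p| + 1))) //.
  apply: ler_pM => //; first by rewrite exprn_ge0 // ltW.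
  by rewrite lerDl.
by rewrite -ltr_pdivlMr // ltr_wpDl.
Unshelve. all: by end_near.
Qed.

Lemma BbE0 b k : Bb b 0 k = cyl k (fun _ => b).
Proof. by apply/seteqP; split => w h i Hi; [apply: h|apply: h]. Qed.

Lemma fix_vals b p : tau lam b p = p -> W lam (tau lam b p) = 1 ->
  hb b p = 1 /\ hb (~~ b) p = 0.
Proof.
move=> fp Wp; have Xp := fix_in_X fp.
have hA : P p (Ab b 0) = 1%E.
  apply/eqP; rewrite eq_le (probability_le1 _ (@mAb b 0)) /=.
  have -> : P p (Ab b 0) = (P p (Ab b 0) + (0:R)%:E)%E by rewrite adde0.
  apply: le_lim_shift (@Ab_cvg p b 0) _ => k /=.
  rewrite adde0 BbE0 hP // /cylw big1 // => i _.
  have -> : taus lam (fun _ => b) i.+1 p = p.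
    by rewrite taus_cst; elim: (i.+1) => //= j ->.
  by rewrite -{1}fp.
split.
  apply/eqP; rewrite eq_le hb_le1 /= /hb -lee_fin -(Pfin p (mNb b)).
  have -> : (1%:E = P p (Ab b 0))%E by rewrite hA.
  by apply: le_measure; rewrite ?inE; [exact: mAb|exact: mNb|move=> w h; exists 0%N].
apply/eqP; rewrite eq_le hb_ge0 andbT /hb -lee_fin -(Pfin p (mNb (~~ b))).
have <- : P p (~` Ab b 0) = (0:R)%:E.
  by rewrite (probability_setC _ (@mAb b 0)) hA subee.
apply: le_measure; rewrite ?inE; [exact: mNb|apply: measurableC; exact: mAb|].
move=> w [m hm] hA0; have := hm m (leqnn m); rewrite (hA0 m) //.
by case: b {fp Wp hA hA0 hm}.
Qed.

Lemma Z b (M : set R) : M `<=` X ->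
  (forall y c, M y -> W lam (tau lam c y) != 0 -> M (tau lam c y)) ->
  (forall y, M y -> exists k, W lam (tau lam b (iter k (tau lam b) y)) = 0) ->
  forall y, M y -> P y (Nb b) = 0%E.
Proof.
move=> MX Mcl Mbad.
have hA : forall m y, M y -> P y (Ab b m) = 0%E.
  elim=> [|m IH] y My.
    have [k hk] := Mbad y My.
    apply/eqP; rewrite eq_le measure_ge0 andbT.
    have <- : P y (cyl k.+1 (fun _ => b)) = 0%E.
      rewrite hP; last exact: MX.
      by rewrite /cylw (big_ord_recr k) /= taus_cst hk mulr0.
    apply: le_measure; rewrite ?inE; [exact: mAb|exact: mcyl|].
    by move=> w h i _; apply: h.
  rewrite -shift_Ab decomp; [|exact: MX|exact: mAb].
  have t c : ((W lam (tau lam c y))%:E * P (tau lam c y) (Ab b m) = 0)%E.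
    have [->|/(Mcl _ _ My) Mt] := eqVneq (W lam (tau lam c y)) 0.
      by rewrite mul0e.
    by rewrite IH // mule0.
  by rewrite !t adde0.
move=> y My; apply/eqP; rewrite eq_le measure_ge0 andbT.
apply: le_lim_ub (@Nb_cvg y b) _ => m /=.
by rewrite hA.
Qed.

Lemma W01c c y : W lam (tau lam c y) + W lam (tau lam (~~ c) y) = 1.
Proof. by case: c; rewrite ?W01 // addrC W01. Qed.

Lemma minarg (h : R -> R) (L : R) b p :
  0 <= L ->
  (forall x y, X x -> X y -> `|h x - h y| <= L * `|x - y|) ->
  (forall x, X x -> h x = W lam (tau lam false x) * h (tau lam false x) +
                          W lam (tau lam true x) * h (tau lam true x)) ->
  tau lam b p = p ->
  forall xm, X xm -> (forall x, X x -> h xm <= h x) -> P xm (Nb b) != 0%E ->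
  h xm = h p.
Proof.
move=> L0 lip harm fp xm Xxm hmin Pne.
pose M := [set y | X y /\ h y = h xm].
have harmc c y : X y -> h y = W lam (tau lam c y) * h (tau lam c y) +
                          W lam (tau lam (~~ c) y) * h (tau lam (~~ c) y).
  by move=> Xy; rewrite harm //; case: c => //; rewrite addrC.
have Mcl y c : M y -> W lam (tau lam c y) != 0 -> M (tau lam c y).
  move=> [Xy hy] Wn; split; first exact: tauX.
  have Xc := tauX c Xy; have Xc' := tauX (~~ c) Xy.
  apply/eqP; rewrite eq_le hmin // andbT.
  have e := harmc c y Xy; rewrite hy in e.
  have W1 := W01c c y.
  have Wp : 0 < W lam (tau lam c y) by rewrite lt_def Wn W_ge0.
  have h1 := hmin _ Xc'.
  have Wc'0 := W_ge0 lam (tau lam (~~ c) y).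
  rewrite -(ler_pM2l Wp).
  have : W lam (tau lam (~~ c) y) * h xm <= W lam (tau lam (~~ c) y) * h (tau lam (~~ c) y).
    by rewrite ler_wpM2l.
  move: e W1; set a := W lam (tau lam c y); set a' := W lam (tau lam (~~ c) y).
  set u := h xm; set v := h (tau lam c y); set v' := h (tau lam (~~ c) y).
  move=> e W1 h2.
  have -> : a * u = (a + a') * u - a' * u by ring.
  rewrite W1 mul1r.
  have -> : a * v = u - a' * v' by rewrite {1}e; ring.
  by rewrite lerD2l lerN2.
have : ~ (forall y, M y -> exists k, W lam (tau lam b (iter k (tau lam b) y)) = 0).
  move=> H; move/eqP: Pne; apply.
  by apply: (@Z b M _ Mcl H xm); [move=> y []|split].
move=> /existsNP [y /not_implyP [My /forallNP good]].
have Mk k : M (iter k (tau lam b) y).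
  elim: k => // k IH; rewrite iterS; apply: Mcl => //; apply/eqP; exact: good.
have Xp := fix_in_X fp.
have bnd k : `|h xm - h p| <= L * (lam ^+ k * `|y - p|).
  have [Xk <-] := Mk k; rewrite -(@iter_tau_dist b) //; exact: lip.
apply/eqP; rewrite -subr_eq0 -normr_eq0; apply/negPn/negP => dne.
have d0 : 0 < `|h xm - h p| by rewrite lt_def dne normr_ge0.
have pos : 0 < L * `|y - p| + 1 by rewrite ltr_wpDl // mulr_ge0.
have [k hk] := geo_small (divr_gt0 d0 pos).
have := bnd k; rewrite mulrA [L * _]mulrC -mulrA.
move=> hb'; have : lam ^+ k * (L * `|y - p|) < `|h xm - h p|.
  apply: le_lt_trans (_ : lam ^+ k * (L * `|y - p| + 1) < _).
    by apply: ler_wpM2l; [rewrite exprn_ge0 // ltW|rewrite lerDl].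
  by rewrite -ltr_pdivlMr.
by rewrite ltNge hb'.
Qed.

Lemma hsum_le1 x : hb false x + hb true x <= 1.
Proof.
rewrite /hb -lee_fin EFinD -(Pfin x (mNb false)) -(Pfin x (mNb true)).
rewrite -measureU; first by apply: probability_le1; apply: measurableU; apply: mNb.
- exact: mNb.
- exact: mNb.
apply/seteqP; split => // w [[m0 h0] [m1 h1]].
by have := h0 (maxn m0 m1) (leq_maxl _ _); rewrite h1 // leq_maxr.
Qed.

Lemma P_ne0 b x : hb b x != 0 -> P x (Nb b) != 0%E.
Proof. by apply: contra => /eqP; rewrite /hb => ->. Qed.

Lemma cos_npi2 (n : nat) : cos (pi *+ n) ^+ 2 = 1 :> R.
Proof.
elim: n => [|n IH]; first by rewrite mulr0n cos0 expr1n.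
by rewrite mulrSr cosDpi sqrrN IH.
Qed.

Lemma main_sec :
  ( {within X, continuous (h0 P)}
    /\ (forall x, X x -> RW lam (h0 P) x = h0 P x)
    /\ ((forall x, X x -> h0 P x != 0) -> forall x, X x -> h0 P x = 1) )
  /\
  (forall n : nat, (0 < n)%N -> lam = 1 - (2 * n)%:R^-1 ->
     {within X, continuous (h1 P)}
     /\ (forall x, X x -> RW lam (h1 P) x = h1 P x)
     /\ (exists2 x, X x & h0 P x = 0)
     /\ (exists2 x, X x & h1 P x = 0)
     /\ (exists x y, [/\ X x, X y & h0 P x != h0 P y])
     /\ (exists x y, [/\ X x, X y & h1 P x != h1 P y])
     /\ ((forall x, X x -> h0 P x + h1 P x != 0) ->
           forall x, X x -> h0 P x + h1 P x = 1)).
Proof using hlam0 hlam1 hX hP.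
have E0 : h0 P = hb false by [].
have E1 : h1 P = hb true by [].
rewrite E0 E1.
have [Xne [cX _]] := hX.
have fp0 : tau lam false 0 = 0 by rewrite /tau mulr0.
have W0 : W lam (tau lam false 0) = 1 by rewrite W0E // mulr0 cos0 expr1n.
have [h00 h10] := fix_vals fp0 W0.
have X0 := fix_in_X fp0.
have cont b : {within X, continuous (hb b)}.
  by apply: (lip_cont K_ge0); apply: hb_lip.
have harm b x : X x -> RW lam (hb b) x = hb b x.
  by move=> Xx; rewrite /RW [RHS]hb_harm.
split.
  split; first exact: cont.
  split; first exact: harm.
  move=> nz.
  have [xm /set_mem Xxm hmin] := compact_EVT_min Xne cX (cont false).
  have hmin' x : X x -> hb false xm <= hb false x by move=> Xx; apply: hmin; apply/mem_set.
  have := @minarg (hb false) K false 0 K_ge0 (@hb_lip false) (@hb_harm false) fp0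
     xm Xxm hmin' (P_ne0 (nz xm Xxm)).
  rewrite h00 => hxm x Xx.
  by apply/eqP; rewrite eq_le hb_le1 -hxm hmin'.
move=> n n0 lamE.
have nz : n%:R != 0 :> R by rewrite pnatr_eq0 -lt0n.
pose p := ((2 * n)%:R - 1) / 4 : R.
have fp1 : tau lam true p = p by rewrite /tau lamE /p; field.
have W1 : W lam (tau lam true p) = 1.
  rewrite W1E // /p.
  have -> : 2 * pi * (((2 * n)%:R - 1) / 4) = pi * n%:R - pi / 2 :> R.
    have e2 : (2 * n)%:R = 2 * (n%:R) :> R by exact: natrM.
    by rewrite e2; field.
  by rewrite sinBpihalf sqrrN mulr_natr cos_npi2.
have [h1p h0p] := fix_vals fp1 W1.
have Xp := fix_in_X fp1.
split; first exact: cont.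
split; first exact: harm.
split; first by exists p.
split; first by exists 0.
split; first by exists 0, p; split => //; rewrite h00 h0p oner_eq0.
split; first by exists 0, p; split => //; rewrite h10 h1p eq_sym oner_eq0.
move=> nz2.
pose h x := hb false x + hb true x.
have hlip x y : X x -> X y -> `|h x - h y| <= (K + K) * `|x - y|.
  move=> Xx Xy; rewrite /h mulrDl.
  have -> : hb false x + hb true x - (hb false y + hb true y) =
    (hb false x - hb false y) + (hb true x - hb true y) by ring.
  by rewrite (le_trans (ler_normD _ _)) // lerD // hb_lip.
have hharm x : X x -> h x = W lam (tau lam false x) * h (tau lam false x) +
                          W lam (tau lam true x) * h (tau lam true x).
  by move=> Xx; rewrite /h (hb_harm false Xx) (hb_harm true Xx); ring.
have KK : 0 <= K + K by rewrite addr_ge0 // K_ge0.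
have [xm /set_mem Xxm hmin] := compact_EVT_min Xne cX (lip_cont KK hlip).
have hmin' x : X x -> h xm <= h x by move=> Xx; apply: hmin; apply/mem_set.
have hxm : h xm = 1.
  have := nz2 xm Xxm; rewrite -/(h xm).
  have [z0|nz0] := eqVneq (hb false xm) 0.
    rewrite /h z0 add0r => nz1.
    have := @minarg h (K + K) true p KK hlip hharm fp1 xm Xxm hmin' (P_ne0 nz1).
    by rewrite /h h1p h0p z0 !add0r.
  move=> _.
  have := @minarg h (K + K) false 0 KK hlip hharm fp0 xm Xxm hmin' (P_ne0 nz0).
  by rewrite /h h00 h10 addr0.
move=> x Xx; apply/eqP; rewrite eq_le hsum_le1 /=.
by rewrite -hxm; exact: hmin'.
Qed.
End Main.


Unset Implicit Arguments.

Theorem lemma4p1 (R : realType) (lam : R) (hlam0 : 0 < lam) (hlam1 : lam < 1)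
  (X : set R) (hX : is_attractor lam X)
  (P : R -> probability Omega R) (hP : is_path_measures lam X P) :
  ( {within X, continuous (h0 P)}
    /\ (forall x, X x -> RW lam (h0 P) x = h0 P x)
    /\ ((forall x, X x -> h0 P x != 0) -> forall x, X x -> h0 P x = 1) )
  /\
  (forall n : nat, (0 < n)%N -> lam = 1 - (2 * n)%:R^-1 ->
     {within X, continuous (h1 P)}
     /\ (forall x, X x -> RW lam (h1 P) x = h1 P x)
     /\ (exists2 x, X x & h0 P x = 0)
     /\ (exists2 x, X x & h1 P x = 0)
     /\ (exists x y, [/\ X x, X y & h0 P x != h0 P y])
     /\ (exists x y, [/\ X x, X y & h1 P x != h1 P y])
     /\ ((forall x, X x -> h0 P x + h1 P x != 0) ->
           forall x, X x -> h0 P x + h1 P x = 1)).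
Proof. exact: (@main_sec R lam hlam0 hlam1 X hX P hP). Qed.
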